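(* For every integer $n \geq 5$, the Roman domination number of the generalized Petersen graph $P(n,2)$ is $$\gamma_R(P(n,2)) = \left\lceil \frac{8n}{7} \right\rceil .$$
   Context: For integers $n \ge 3$ and $1 \le k < n/2$, the generalized Petersen graph $P(n,k)$ has vertex set $\{v_i, u_i : 0 \le i \le n-1\}$ and edge set $\{v_iv_{i+1},\ v_iu_i,\ u_iu_{i+k} : 0 \le i \le n-1\}$, with subscripts taken modulo $n$. A Roman domination function (RDF) of a graph $G$ is a function $f: V(G)\to\{0,1,2\}$ such that every vertex $u$ with $f(u)=0$ is adjacent to at least one vertex $v$ with $f(v)=2$. Its weight is $\sum_{u\in V(G)} f(u)$. The Roman domination number $\gamma_R(G)$ is the minimum weight of an RDF of $G$. *)

(* Defs.v *)
From mathcomp Require Import all_boot.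
Set Implicit Arguments. Unset Strict Implicit. Unset Printing Implicit Defensive.

(* Vertices of the generalized Petersen graph P(n,k):
   (false, i) stands for v_i and (true, i) stands for u_i, i in {0..n-1}. *)
Definition gp_vertex (n : nat) : finType := (bool * 'I_n)%type.

Definition gp_adj (n k : nat) (x y : gp_vertex n) : bool :=
  match x, y with
  | (false, i), (false, j) => ((i + 1) %% n == j) || ((j + 1) %% n == i)
  | (true, i), (true, j) => ((i + k) %% n == j) || ((j + k) %% n == i)
  | (false, i), (true, j) => i == j
  | (true, i), (false, j) => i == j
  end.

Definition is_rdf (V : finType) (e : rel V) (f : {ffun V -> 'I_3}) : bool :=
  [forall u, (val (f u) == 0) ==> [exists v, e u v && (val (f v) == 2)]].

Definition rdf_weight (V : finType) (f : {ffun V -> 'I_3}) : nat :=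
  \sum_(u : V) val (f u).

(* Roman domination number: minimum weight of an RDF.  The constant-2
   function is always an RDF of weight 2*|V|, so this is the true minimum. *)
Definition roman_domination_number (V : finType) (e : rel V) : nat :=
  \big[minn/(2 * #|V|)]_(f : {ffun V -> 'I_3} | is_rdf e f) rdf_weight f.

Definition gammaR_GP (n k : nat) : nat :=
  @roman_domination_number (gp_vertex n) (@gp_adj n k).

(* Main.v *)
Require Import Defs.
From mathcomp Require Import all_boot.
From Stdlib Require Import Lia.
Set Implicit Arguments. Unset Strict Implicit. Unset Printing Implicit Defensive.

Ltac nlia := repeat match goal with
 | x := _ |- _ => subst x
 | H : is_true (_ <= _) |- _ => move/leP: H => H
 | H : is_true (_ < _) |- _ => move/ltP: H => H
 | H : is_true (~~ (_ <= _)) |- _ => move/negP/leP: H => H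
 | H : is_true (~~ (_ < _)) |- _ => move/negP/ltP: H => H
 end;
 first [apply/leP | apply/ltP | idtac];
 change addn with Nat.add in *; change subn with Nat.sub in *; change muln with Nat.mul in *; lia.

Definition col := (nat * nat)%type.
Definition valid (c0 c1 c2 c3 c4 : col) : bool :=
  [|| c2.1 != 0, c1.1 == 2, c3.1 == 2 | c2.2 == 2] &&
  [|| c2.2 != 0, c0.2 == 2, c4.2 == 2 | c2.1 == 2].
Definition phiT : seq (seq (seq (seq nat))) :=
[:: [:: [:: [:: 27; 27; 27; 27; 27; 27; 27; 27; 27]; [:: 27; 27; 27; 27; 27; 27; 27; 27; 27]; [:: 27; 27; 27; 27; 27; 27; 27; 27; 27]; [:: 27; 27; 27; 27; 27; 27; 27; 27; 27]; [:: 27; 27; 27; 27; 27; 27; 27; 27; 27]; [:: 27; 27; 27; 27; 27; 27; 27; 27; 27]; [:: 9; 16; 22; 16; 23; 27; 23; 27; 27]; [:: 16; 23; 27; 23; 27; 27; 27; 27; 27]; [:: 19; 26; 27; 26; 27; 27; 27; 27; 27]]; [:: [:: 27; 27; 27; 27; 27; 27; 27; 27; 27]; [:: 27; 27; 27; 27; 27; 27; 27; 27; 27]; [:: 27; 27; 27; 27; 27; 27; 27; 27; 27]; [:: 27; 27; 27; 27; 27; 27; 27; 27; 27]; [:: 27; 27; 27; 27; 27; 27; 27; 27; 27]; [:: 27; 27; 27; 27; 27; 27; 27; 27; 27]; [:: 15; 22; 27; 22; 27; 27; 27; 27; 27]; [:: 19; 26; 27; 26; 27; 27; 27; 27; 27];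 [:: 19; 26; 27; 26; 27; 27; 27; 27; 27]]; [:: [:: 8; 15; 22; 15; 22; 27; 22; 27; 27]; [:: 15; 22; 27; 22; 27; 27; 27; 27; 27]; [:: 13; 20; 27; 20; 27; 27; 27; 27; 27]; [:: 15; 22; 27; 22; 27; 27; 27; 27; 27]; [:: 19; 26; 27; 26; 27; 27; 27; 27; 27]; [:: 19; 26; 27; 26; 27; 27; 27; 27; 27]; [:: 19; 26; 27; 26; 27; 27; 27; 27; 27]; [:: 19; 26; 27; 26; 27; 27; 27; 27; 27]; [:: 19; 26; 27; 26; 27; 27; 27; 27; 27]]; [:: [:: 2; 9; 15; 9; 16; 22; 16; 23; 27]; [:: 9; 16; 22; 16; 23; 27; 23; 27; 27]; [:: 16; 23; 20; 23; 27; 27; 27; 27; 27]; [:: 9; 16; 22; 16; 23; 27; 23; 27; 27]; [:: 16; 23; 27; 23; 27; 27; 27; 27; 27]; [:: 19; 26; 27; 26; 27; 27; 27; 27; 27]; [:: 16; 23; 27; 23; 27; 27; 27; 27; 27]; [:: 19; 26; 27; 26; 27; 27; 27; 27; 27]; [:: 19; 26; 27; 26; 27; 27; 27; 27; 27]]; [:: [:: 8; 15; 22; 15; 22; 27; 22; 27; 27]; [:: 15; 22; 27; 22; 27; 27; 27; 27; 27]; [:: 13; 20; 27; 20; 27; 27; 27; 27; 27]; [:: 15; 22; 27; 22; 27; 27; 27; 27; 27]; [:: 19; 26; 27; 26; 27; 27; 27; 27; 27]; [:: 19; 26; 27; 26; 27; 27; 27; 27; 27]; [:: 19; 26; 27;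 26; 27; 27; 27; 27; 27]; [:: 19; 26; 27; 26; 27; 27; 27; 27; 27]; [:: 19; 26; 27; 26; 27; 27; 27; 27; 27]]; [:: [:: 11; 18; 25; 18; 25; 27; 25; 27; 27]; [:: 18; 25; 27; 25; 27; 27; 27; 27; 27]; [:: 19; 26; 27; 26; 27; 27; 27; 27; 27]; [:: 18; 25; 27; 25; 27; 27; 27; 27; 27]; [:: 19; 26; 27; 26; 27; 27; 27; 27; 27]; [:: 19; 26; 27; 26; 27; 27; 27; 27; 27]; [:: 19; 26; 27; 26; 27; 27; 27; 27; 27]; [:: 19; 26; 27; 26; 27; 27; 27; 27; 27]; [:: 19; 26; 27; 26; 27; 27; 27; 27; 27]]; [:: [:: 1; 8; 15; 8; 15; 22; 15; 22; 27]; [:: 8; 15; 22; 15; 22; 27; 22; 27; 27]; [:: 12; 19; 26; 19; 26; 27; 26; 27; 27]; [:: 8; 15; 22; 15; 22; 27; 22; 27; 27]; [:: 15; 22; 27; 22; 27; 27; 27; 27; 27]; [:: 19; 26; 27; 26; 27; 27; 27; 27; 27]; [:: 15; 22; 27; 22; 27; 27; 27; 27; 27]; [:: 19; 26; 27; 26; 27; 27; 27; 27; 27]; [:: 19; 26; 27; 26; 27; 27; 27; 27; 27]]; [:: [:: 8; 15; 22; 15; 22; 27; 22; 27; 27]; [:: 15; 22; 27; 22; 27; 27; 27; 27; 27]; [:: 19; 26; 27; 26; 27; 27; 27; 27; 27]; [:: 15; 22; 27; 22; 27; 27; 27; 27; 27]; [:: 19; 26; 27; 26; 27; 27; 27; 27;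 27]; [:: 19; 26; 27; 26; 27; 27; 27; 27; 27]; [:: 19; 26; 27; 26; 27; 27; 27; 27; 27]; [:: 19; 26; 27; 26; 27; 27; 27; 27; 27]; [:: 19; 26; 27; 26; 27; 27; 27; 27; 27]]; [:: [:: 11; 18; 25; 18; 25; 27; 25; 27; 27]; [:: 18; 25; 27; 25; 27; 27; 27; 27; 27]; [:: 19; 26; 27; 26; 27; 27; 27; 27; 27]; [:: 18; 25; 27; 25; 27; 27; 27; 27; 27]; [:: 19; 26; 27; 26; 27; 27; 27; 27; 27]; [:: 19; 26; 27; 26; 27; 27; 27; 27; 27]; [:: 19; 26; 27; 26; 27; 27; 27; 27; 27]; [:: 19; 26; 27; 26; 27; 27; 27; 27; 27]; [:: 19; 26; 27; 26; 27; 27; 27; 27; 27]]]; [:: [:: [:: 27; 27; 27; 27; 27; 27; 27; 27; 27]; [:: 27; 27; 27; 27; 27; 27; 27; 27; 27]; [:: 27; 27; 27; 27; 27; 27; 27; 27; 27]; [:: 27; 27; 27; 27; 27; 27; 27; 27; 27]; [:: 27; 27; 27; 27; 27; 27; 27; 27; 27]; [:: 27; 27; 27; 27; 27; 27; 27; 27; 27]; [:: 16; 23; 20; 23; 27; 27; 27; 27; 27]; [:: 19; 26; 27; 26; 27; 27; 27; 27; 27]; [:: 19; 26; 27; 26; 27; 27; 27; 27; 27]]; [:: [:: 27; 27; 27; 27; 27; 27; 27; 27; 27]; [:: 27; 27; 27; 27; 27; 27; 27; 27; 27]; [:: 27; 27; 27; 27; 27; 27; 27; 27; 27]; [:: 27;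 27; 27; 27; 27; 27; 27; 27; 27]; [:: 27; 27; 27; 27; 27; 27; 27; 27; 27]; [:: 27; 27; 27; 27; 27; 27; 27; 27; 27]; [:: 13; 20; 27; 20; 27; 27; 27; 27; 27]; [:: 19; 26; 27; 26; 27; 27; 27; 27; 27]; [:: 19; 26; 27; 26; 27; 27; 27; 27; 27]]; [:: [:: 6; 13; 20; 13; 20; 27; 20; 27; 27]; [:: 13; 20; 27; 20; 27; 27; 27; 27; 27]; [:: 19; 26; 27; 26; 27; 27; 27; 27; 27]; [:: 13; 20; 27; 20; 27; 27; 27; 27; 27]; [:: 19; 26; 27; 26; 27; 27; 27; 27; 27]; [:: 19; 26; 27; 26; 27; 27; 27; 27; 27]; [:: 19; 26; 27; 26; 27; 27; 27; 27; 27]; [:: 19; 26; 27; 26; 27; 27; 27; 27; 27]; [:: 19; 26; 27; 26; 27; 27; 27; 27; 27]]; [:: [:: 9; 16; 13; 16; 23; 20; 23; 27; 27]; [:: 16; 23; 20; 23; 27; 27; 27; 27; 27]; [:: 19; 26; 27; 26; 27; 27; 27; 27; 27]; [:: 16; 23; 20; 23; 27; 27; 27; 27; 27]; [:: 19; 26; 27; 26; 27; 27; 27; 27; 27]; [:: 19; 26; 27; 26; 27; 27; 27; 27; 27]; [:: 19; 26; 27; 26; 27; 27; 27; 27; 27]; [:: 19; 26; 27; 26; 27; 27; 27; 27; 27]; [:: 19; 26; 27; 26; 27; 27; 27; 27; 27]]; [:: [:: 6; 13; 20; 13; 20; 27; 20; 27; 27]; [:: 13; 20; 27; 20; 27; 27;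 27; 27; 27]; [:: 19; 26; 27; 26; 27; 27; 27; 27; 27]; [:: 13; 20; 27; 20; 27; 27; 27; 27; 27]; [:: 19; 26; 27; 26; 27; 27; 27; 27; 27]; [:: 19; 26; 27; 26; 27; 27; 27; 27; 27]; [:: 19; 26; 27; 26; 27; 27; 27; 27; 27]; [:: 19; 26; 27; 26; 27; 27; 27; 27; 27]; [:: 19; 26; 27; 26; 27; 27; 27; 27; 27]]; [:: [:: 11; 18; 25; 18; 25; 27; 25; 27; 27]; [:: 18; 25; 27; 25; 27; 27; 27; 27; 27]; [:: 19; 26; 27; 26; 27; 27; 27; 27; 27]; [:: 18; 25; 27; 25; 27; 27; 27; 27; 27]; [:: 19; 26; 27; 26; 27; 27; 27; 27; 27]; [:: 19; 26; 27; 26; 27; 27; 27; 27; 27]; [:: 19; 26; 27; 26; 27; 27; 27; 27; 27]; [:: 19; 26; 27; 26; 27; 27; 27; 27; 27]; [:: 19; 26; 27; 26; 27; 27; 27; 27; 27]]; [:: [:: 5; 12; 19; 12; 19; 26; 19; 26; 27]; [:: 12; 19; 26; 19; 26; 27; 26; 27; 27]; [:: 19; 26; 27; 26; 27; 27; 27; 27; 27]; [:: 12; 19; 26; 19; 26; 27; 26; 27; 27]; [:: 19; 26; 27; 26; 27; 27; 27; 27; 27]; [:: 19; 26; 27; 26; 27; 27; 27; 27; 27]; [:: 19; 26; 27; 26; 27; 27; 27; 27; 27]; [:: 19; 26; 27; 26; 27; 27; 27; 27; 27]; [:: 19; 26; 27; 26; 27; 27; 27; 27; 27]]; [:: [:: 11;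 18; 25; 18; 25; 27; 25; 27; 27]; [:: 18; 25; 27; 25; 27; 27; 27; 27; 27]; [:: 19; 26; 27; 26; 27; 27; 27; 27; 27]; [:: 18; 25; 27; 25; 27; 27; 27; 27; 27]; [:: 19; 26; 27; 26; 27; 27; 27; 27; 27]; [:: 19; 26; 27; 26; 27; 27; 27; 27; 27]; [:: 19; 26; 27; 26; 27; 27; 27; 27; 27]; [:: 19; 26; 27; 26; 27; 27; 27; 27; 27]; [:: 19; 26; 27; 26; 27; 27; 27; 27; 27]]; [:: [:: 11; 18; 25; 18; 25; 27; 25; 27; 27]; [:: 18; 25; 27; 25; 27; 27; 27; 27; 27]; [:: 19; 26; 27; 26; 27; 27; 27; 27; 27]; [:: 18; 25; 27; 25; 27; 27; 27; 27; 27]; [:: 19; 26; 27; 26; 27; 27; 27; 27; 27]; [:: 19; 26; 27; 26; 27; 27; 27; 27; 27]; [:: 19; 26; 27; 26; 27; 27; 27; 27; 27]; [:: 19; 26; 27; 26; 27; 27; 27; 27; 27]; [:: 19; 26; 27; 26; 27; 27; 27; 27; 27]]]; [:: [:: [:: 27; 27; 27; 27; 27; 27; 27; 27; 27]; [:: 27; 27; 27; 27; 27; 27; 27; 27; 27]; [:: 27; 27; 27; 27; 27; 27; 27; 27; 27]; [:: 27; 27; 27; 27; 27; 27; 27; 27; 27]; [:: 27; 27; 27; 27; 27; 27; 27; 27; 27]; [:: 27; 27; 27; 27; 27; 27; 27; 27; 27]; [:: 10; 17; 24; 17; 24; 27; 24; 27; 27]; [:: 17; 24; 27; 24; 27; 27;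 27; 27; 27]; [:: 19; 26; 27; 26; 27; 27; 27; 27; 27]]; [:: [:: 27; 27; 27; 27; 27; 27; 27; 27; 27]; [:: 27; 27; 27; 27; 27; 27; 27; 27; 27]; [:: 27; 27; 27; 27; 27; 27; 27; 27; 27]; [:: 27; 27; 27; 27; 27; 27; 27; 27; 27]; [:: 27; 27; 27; 27; 27; 27; 27; 27; 27]; [:: 27; 27; 27; 27; 27; 27; 27; 27; 27]; [:: 17; 24; 27; 24; 27; 27; 27; 27; 27]; [:: 19; 26; 27; 26; 27; 27; 27; 27; 27]; [:: 19; 26; 27; 26; 27; 27; 27; 27; 27]]; [:: [:: 4; 11; 18; 11; 18; 25; 18; 25; 27]; [:: 11; 18; 25; 18; 25; 27; 25; 27; 27]; [:: 18; 25; 27; 25; 27; 27; 27; 27; 27]; [:: 11; 18; 25; 18; 25; 27; 25; 27; 27]; [:: 18; 25; 27; 25; 27; 27; 27; 27; 27]; [:: 19; 26; 27; 26; 27; 27; 27; 27; 27]; [:: 18; 25; 27; 25; 27; 27; 27; 27; 27]; [:: 19; 26; 27; 26; 27; 27; 27; 27; 27]; [:: 19; 26; 27; 26; 27; 27; 27; 27; 27]]; [:: [:: 3; 10; 17; 10; 17; 24; 17; 24; 27]; [:: 10; 17; 24; 17; 24; 27; 24; 27; 27]; [:: 17; 24; 27; 24; 27; 27; 27; 27; 27]; [:: 10; 17; 24; 17; 24; 27; 24; 27; 27]; [:: 17; 24; 27; 24; 27; 27; 27; 27; 27]; [:: 19; 26; 27; 26; 27; 27; 27; 27; 27]; [:: 17;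 24; 27; 24; 27; 27; 27; 27; 27]; [:: 19; 26; 27; 26; 27; 27; 27; 27; 27]; [:: 19; 26; 27; 26; 27; 27; 27; 27; 27]]; [:: [:: 10; 17; 24; 17; 24; 27; 24; 27; 27]; [:: 17; 24; 27; 24; 27; 27; 27; 27; 27]; [:: 19; 26; 27; 26; 27; 27; 27; 27; 27]; [:: 17; 24; 27; 24; 27; 27; 27; 27; 27]; [:: 19; 26; 27; 26; 27; 27; 27; 27; 27]; [:: 19; 26; 27; 26; 27; 27; 27; 27; 27]; [:: 19; 26; 27; 26; 27; 27; 27; 27; 27]; [:: 19; 26; 27; 26; 27; 27; 27; 27; 27]; [:: 19; 26; 27; 26; 27; 27; 27; 27; 27]]; [:: [:: 11; 18; 25; 18; 25; 27; 25; 27; 27]; [:: 18; 25; 27; 25; 27; 27; 27; 27; 27]; [:: 19; 26; 27; 26; 27; 27; 27; 27; 27]; [:: 18; 25; 27; 25; 27; 27; 27; 27; 27]; [:: 19; 26; 27; 26; 27; 27; 27; 27; 27]; [:: 19; 26; 27; 26; 27; 27; 27; 27; 27]; [:: 19; 26; 27; 26; 27; 27; 27; 27; 27]; [:: 19; 26; 27; 26; 27; 27; 27; 27; 27]; [:: 19; 26; 27; 26; 27; 27; 27; 27; 27]]; [:: [:: 10; 17; 24; 17; 24; 27; 24; 27; 27]; [:: 17; 24; 27; 24; 27; 27; 27; 27; 27]; [:: 19; 26; 27; 26; 27; 27; 27; 27; 27]; [:: 17; 24; 27; 24; 27; 27; 27; 27; 27]; [:: 19; 26; 27; 26; 27; 27;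 27; 27; 27]; [:: 19; 26; 27; 26; 27; 27; 27; 27; 27]; [:: 19; 26; 27; 26; 27; 27; 27; 27; 27]; [:: 19; 26; 27; 26; 27; 27; 27; 27; 27]; [:: 19; 26; 27; 26; 27; 27; 27; 27; 27]]; [:: [:: 11; 18; 25; 18; 25; 27; 25; 27; 27]; [:: 18; 25; 27; 25; 27; 27; 27; 27; 27]; [:: 19; 26; 27; 26; 27; 27; 27; 27; 27]; [:: 18; 25; 27; 25; 27; 27; 27; 27; 27]; [:: 19; 26; 27; 26; 27; 27; 27; 27; 27]; [:: 19; 26; 27; 26; 27; 27; 27; 27; 27]; [:: 19; 26; 27; 26; 27; 27; 27; 27; 27]; [:: 19; 26; 27; 26; 27; 27; 27; 27; 27]; [:: 19; 26; 27; 26; 27; 27; 27; 27; 27]]; [:: [:: 11; 18; 25; 18; 25; 27; 25; 27; 27]; [:: 18; 25; 27; 25; 27; 27; 27; 27; 27]; [:: 19; 26; 27; 26; 27; 27; 27; 27; 27]; [:: 18; 25; 27; 25; 27; 27; 27; 27; 27]; [:: 19; 26; 27; 26; 27; 27; 27; 27; 27]; [:: 19; 26; 27; 26; 27; 27; 27; 27; 27]; [:: 19; 26; 27; 26; 27; 27; 27; 27; 27]; [:: 19; 26; 27; 26; 27; 27; 27; 27; 27]; [:: 19; 26; 27; 26; 27; 27; 27; 27; 27]]]; [:: [:: [:: 27; 27; 27; 27; 27; 27; 27; 27; 27]; [:: 27; 27; 27; 27; 27; 27; 27; 27; 27]; [:: 27; 27; 27; 27; 27; 27; 27; 27; 27];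 [:: 27; 27; 27; 27; 27; 27; 27; 27; 27]; [:: 27; 27; 27; 27; 27; 27; 27; 27; 27]; [:: 27; 27; 27; 27; 27; 27; 27; 27; 27]; [:: 9; 16; 22; 16; 23; 27; 23; 27; 27]; [:: 16; 23; 27; 23; 27; 27; 27; 27; 27]; [:: 19; 26; 27; 26; 27; 27; 27; 27; 27]]; [:: [:: 27; 27; 27; 27; 27; 27; 27; 27; 27]; [:: 27; 27; 27; 27; 27; 27; 27; 27; 27]; [:: 27; 27; 27; 27; 27; 27; 27; 27; 27]; [:: 27; 27; 27; 27; 27; 27; 27; 27; 27]; [:: 27; 27; 27; 27; 27; 27; 27; 27; 27]; [:: 27; 27; 27; 27; 27; 27; 27; 27; 27]; [:: 15; 22; 27; 22; 27; 27; 27; 27; 27]; [:: 19; 26; 27; 26; 27; 27; 27; 27; 27]; [:: 19; 26; 27; 26; 27; 27; 27; 27; 27]]; [:: [:: 8; 15; 22; 15; 22; 27; 22; 27; 27]; [:: 15; 22; 27; 22; 27; 27; 27; 27; 27]; [:: 12; 19; 26; 19; 26; 27; 26; 27; 27]; [:: 15; 22; 27; 22; 27; 27; 27; 27; 27]; [:: 19; 26; 27; 26; 27; 27; 27; 27; 27]; [:: 19; 26; 27; 26; 27; 27; 27; 27; 27]; [:: 19; 26; 27; 26; 27; 27; 27; 27; 27]; [:: 19; 26; 27; 26; 27; 27; 27; 27; 27]; [:: 19; 26; 27; 26; 27; 27; 27; 27; 27]]; [:: [:: 2; 9; 15; 9; 16; 22; 16; 23; 27]; [:: 9; 16; 22;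 16; 23; 27; 23; 27; 27]; [:: 16; 23; 26; 23; 27; 27; 27; 27; 27]; [:: 9; 16; 22; 16; 23; 27; 23; 27; 27]; [:: 16; 23; 27; 23; 27; 27; 27; 27; 27]; [:: 19; 26; 27; 26; 27; 27; 27; 27; 27]; [:: 16; 23; 27; 23; 27; 27; 27; 27; 27]; [:: 19; 26; 27; 26; 27; 27; 27; 27; 27]; [:: 19; 26; 27; 26; 27; 27; 27; 27; 27]]; [:: [:: 8; 15; 22; 15; 22; 27; 22; 27; 27]; [:: 15; 22; 27; 22; 27; 27; 27; 27; 27]; [:: 19; 26; 27; 26; 27; 27; 27; 27; 27]; [:: 15; 22; 27; 22; 27; 27; 27; 27; 27]; [:: 19; 26; 27; 26; 27; 27; 27; 27; 27]; [:: 19; 26; 27; 26; 27; 27; 27; 27; 27]; [:: 19; 26; 27; 26; 27; 27; 27; 27; 27]; [:: 19; 26; 27; 26; 27; 27; 27; 27; 27]; [:: 19; 26; 27; 26; 27; 27; 27; 27; 27]]; [:: [:: 11; 18; 25; 18; 25; 27; 25; 27; 27]; [:: 18; 25; 27; 25; 27; 27; 27; 27; 27]; [:: 19; 26; 27; 26; 27; 27; 27; 27; 27]; [:: 18; 25; 27; 25; 27; 27; 27; 27; 27]; [:: 19; 26; 27; 26; 27; 27; 27; 27; 27]; [:: 19; 26; 27; 26; 27; 27; 27; 27; 27]; [:: 19; 26; 27; 26; 27; 27; 27; 27; 27]; [:: 19; 26; 27; 26; 27; 27; 27; 27; 27]; [:: 19; 26; 27; 26; 27; 27; 27; 27; 27]];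 [:: [:: 8; 15; 22; 15; 22; 27; 22; 27; 27]; [:: 15; 22; 27; 22; 27; 27; 27; 27; 27]; [:: 19; 26; 27; 26; 27; 27; 27; 27; 27]; [:: 15; 22; 27; 22; 27; 27; 27; 27; 27]; [:: 19; 26; 27; 26; 27; 27; 27; 27; 27]; [:: 19; 26; 27; 26; 27; 27; 27; 27; 27]; [:: 19; 26; 27; 26; 27; 27; 27; 27; 27]; [:: 19; 26; 27; 26; 27; 27; 27; 27; 27]; [:: 19; 26; 27; 26; 27; 27; 27; 27; 27]]; [:: [:: 11; 18; 25; 18; 25; 27; 25; 27; 27]; [:: 18; 25; 27; 25; 27; 27; 27; 27; 27]; [:: 19; 26; 27; 26; 27; 27; 27; 27; 27]; [:: 18; 25; 27; 25; 27; 27; 27; 27; 27]; [:: 19; 26; 27; 26; 27; 27; 27; 27; 27]; [:: 19; 26; 27; 26; 27; 27; 27; 27; 27]; [:: 19; 26; 27; 26; 27; 27; 27; 27; 27]; [:: 19; 26; 27; 26; 27; 27; 27; 27; 27]; [:: 19; 26; 27; 26; 27; 27; 27; 27; 27]]; [:: [:: 11; 18; 25; 18; 25; 27; 25; 27; 27]; [:: 18; 25; 27; 25; 27; 27; 27; 27; 27]; [:: 19; 26; 27; 26; 27; 27; 27; 27; 27]; [:: 18; 25; 27; 25; 27; 27; 27; 27; 27]; [:: 19; 26; 27; 26; 27; 27; 27; 27; 27]; [:: 19; 26; 27; 26; 27; 27; 27; 27; 27]; [:: 19; 26; 27; 26; 27; 27; 27; 27; 27]; [:: 19; 26; 27; 26;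 27; 27; 27; 27; 27]; [:: 19; 26; 27; 26; 27; 27; 27; 27; 27]]]; [:: [:: [:: 27; 27; 27; 27; 27; 27; 27; 27; 27]; [:: 27; 27; 27; 27; 27; 27; 27; 27; 27]; [:: 27; 27; 27; 27; 27; 27; 27; 27; 27]; [:: 27; 27; 27; 27; 27; 27; 27; 27; 27]; [:: 27; 27; 27; 27; 27; 27; 27; 27; 27]; [:: 27; 27; 27; 27; 27; 27; 27; 27; 27]; [:: 16; 23; 26; 23; 27; 27; 27; 27; 27]; [:: 19; 26; 27; 26; 27; 27; 27; 27; 27]; [:: 19; 26; 27; 26; 27; 27; 27; 27; 27]]; [:: [:: 27; 27; 27; 27; 27; 27; 27; 27; 27]; [:: 27; 27; 27; 27; 27; 27; 27; 27; 27]; [:: 27; 27; 27; 27; 27; 27; 27; 27; 27]; [:: 27; 27; 27; 27; 27; 27; 27; 27; 27]; [:: 27; 27; 27; 27; 27; 27; 27; 27; 27]; [:: 27; 27; 27; 27; 27; 27; 27; 27; 27]; [:: 19; 26; 27; 26; 27; 27; 27; 27; 27]; [:: 19; 26; 27; 26; 27; 27; 27; 27; 27]; [:: 19; 26; 27; 26; 27; 27; 27; 27; 27]]; [:: [:: 5; 12; 19; 12; 19; 26; 19; 26; 27]; [:: 12; 19; 26; 19; 26; 27; 26; 27; 27]; [:: 19; 26; 27; 26; 27; 27; 27; 27; 27]; [:: 12; 19; 26; 19; 26; 27; 26; 27; 27]; [:: 19; 26; 27; 26; 27; 27; 27; 27; 27]; [:: 19; 26; 27; 26; 27; 27; 27;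 27; 27]; [:: 19; 26; 27; 26; 27; 27; 27; 27; 27]; [:: 19; 26; 27; 26; 27; 27; 27; 27; 27]; [:: 19; 26; 27; 26; 27; 27; 27; 27; 27]]; [:: [:: 9; 16; 19; 16; 23; 26; 23; 27; 27]; [:: 16; 23; 26; 23; 27; 27; 27; 27; 27]; [:: 19; 26; 27; 26; 27; 27; 27; 27; 27]; [:: 16; 23; 26; 23; 27; 27; 27; 27; 27]; [:: 19; 26; 27; 26; 27; 27; 27; 27; 27]; [:: 19; 26; 27; 26; 27; 27; 27; 27; 27]; [:: 19; 26; 27; 26; 27; 27; 27; 27; 27]; [:: 19; 26; 27; 26; 27; 27; 27; 27; 27]; [:: 19; 26; 27; 26; 27; 27; 27; 27; 27]]; [:: [:: 11; 18; 25; 18; 25; 27; 25; 27; 27]; [:: 18; 25; 27; 25; 27; 27; 27; 27; 27]; [:: 19; 26; 27; 26; 27; 27; 27; 27; 27]; [:: 18; 25; 27; 25; 27; 27; 27; 27; 27]; [:: 19; 26; 27; 26; 27; 27; 27; 27; 27]; [:: 19; 26; 27; 26; 27; 27; 27; 27; 27]; [:: 19; 26; 27; 26; 27; 27; 27; 27; 27]; [:: 19; 26; 27; 26; 27; 27; 27; 27; 27]; [:: 19; 26; 27; 26; 27; 27; 27; 27; 27]]; [:: [:: 11; 18; 25; 18; 25; 27; 25; 27; 27]; [:: 18; 25; 27; 25; 27; 27; 27; 27; 27]; [:: 19; 26; 27; 26; 27; 27; 27; 27; 27]; [:: 18; 25; 27; 25; 27; 27; 27; 27; 27]; [:: 19;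 26; 27; 26; 27; 27; 27; 27; 27]; [:: 19; 26; 27; 26; 27; 27; 27; 27; 27]; [:: 19; 26; 27; 26; 27; 27; 27; 27; 27]; [:: 19; 26; 27; 26; 27; 27; 27; 27; 27]; [:: 19; 26; 27; 26; 27; 27; 27; 27; 27]]; [:: [:: 11; 18; 25; 18; 25; 27; 25; 27; 27]; [:: 18; 25; 27; 25; 27; 27; 27; 27; 27]; [:: 19; 26; 27; 26; 27; 27; 27; 27; 27]; [:: 18; 25; 27; 25; 27; 27; 27; 27; 27]; [:: 19; 26; 27; 26; 27; 27; 27; 27; 27]; [:: 19; 26; 27; 26; 27; 27; 27; 27; 27]; [:: 19; 26; 27; 26; 27; 27; 27; 27; 27]; [:: 19; 26; 27; 26; 27; 27; 27; 27; 27]; [:: 19; 26; 27; 26; 27; 27; 27; 27; 27]]; [:: [:: 11; 18; 25; 18; 25; 27; 25; 27; 27]; [:: 18; 25; 27; 25; 27; 27; 27; 27; 27]; [:: 19; 26; 27; 26; 27; 27; 27; 27; 27]; [:: 18; 25; 27; 25; 27; 27; 27; 27; 27]; [:: 19; 26; 27; 26; 27; 27; 27; 27; 27]; [:: 19; 26; 27; 26; 27; 27; 27; 27; 27]; [:: 19; 26; 27; 26; 27; 27; 27; 27; 27]; [:: 19; 26; 27; 26; 27; 27; 27; 27; 27]; [:: 19; 26; 27; 26; 27; 27; 27; 27; 27]]; [:: [:: 11; 18; 25; 18; 25; 27; 25; 27; 27]; [:: 18; 25; 27; 25; 27; 27; 27; 27; 27]; [:: 19; 26; 27; 26; 27; 27;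 27; 27; 27]; [:: 18; 25; 27; 25; 27; 27; 27; 27; 27]; [:: 19; 26; 27; 26; 27; 27; 27; 27; 27]; [:: 19; 26; 27; 26; 27; 27; 27; 27; 27]; [:: 19; 26; 27; 26; 27; 27; 27; 27; 27]; [:: 19; 26; 27; 26; 27; 27; 27; 27; 27]; [:: 19; 26; 27; 26; 27; 27; 27; 27; 27]]]; [:: [:: [:: 27; 27; 27; 27; 27; 27; 27; 27; 27]; [:: 27; 27; 27; 27; 27; 27; 27; 27; 27]; [:: 27; 27; 27; 27; 27; 27; 27; 27; 27]; [:: 27; 27; 27; 27; 27; 27; 27; 27; 27]; [:: 27; 27; 27; 27; 27; 27; 27; 27; 27]; [:: 27; 27; 27; 27; 27; 27; 27; 27; 27]; [:: 17; 24; 27; 24; 27; 27; 27; 27; 27]; [:: 19; 26; 27; 26; 27; 27; 27; 27; 27]; [:: 19; 26; 27; 26; 27; 27; 27; 27; 27]]; [:: [:: 27; 27; 27; 27; 27; 27; 27; 27; 27]; [:: 27; 27; 27; 27; 27; 27; 27; 27; 27]; [:: 27; 27; 27; 27; 27; 27; 27; 27; 27]; [:: 27; 27; 27; 27; 27; 27; 27; 27; 27]; [:: 27; 27; 27; 27; 27; 27; 27; 27; 27]; [:: 27; 27; 27; 27; 27; 27; 27; 27; 27]; [:: 19; 26; 27; 26; 27; 27; 27; 27; 27]; [:: 19; 26; 27; 26; 27; 27; 27; 27; 27]; [:: 19; 26; 27; 26; 27; 27; 27; 27; 27]]; [:: [:: 11; 18; 25; 18; 25; 27; 25; 27; 27];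 [:: 18; 25; 27; 25; 27; 27; 27; 27; 27]; [:: 19; 26; 27; 26; 27; 27; 27; 27; 27]; [:: 18; 25; 27; 25; 27; 27; 27; 27; 27]; [:: 19; 26; 27; 26; 27; 27; 27; 27; 27]; [:: 19; 26; 27; 26; 27; 27; 27; 27; 27]; [:: 19; 26; 27; 26; 27; 27; 27; 27; 27]; [:: 19; 26; 27; 26; 27; 27; 27; 27; 27]; [:: 19; 26; 27; 26; 27; 27; 27; 27; 27]]; [:: [:: 10; 17; 24; 17; 24; 27; 24; 27; 27]; [:: 17; 24; 27; 24; 27; 27; 27; 27; 27]; [:: 19; 26; 27; 26; 27; 27; 27; 27; 27]; [:: 17; 24; 27; 24; 27; 27; 27; 27; 27]; [:: 19; 26; 27; 26; 27; 27; 27; 27; 27]; [:: 19; 26; 27; 26; 27; 27; 27; 27; 27]; [:: 19; 26; 27; 26; 27; 27; 27; 27; 27]; [:: 19; 26; 27; 26; 27; 27; 27; 27; 27]; [:: 19; 26; 27; 26; 27; 27; 27; 27; 27]]; [:: [:: 11; 18; 25; 18; 25; 27; 25; 27; 27]; [:: 18; 25; 27; 25; 27; 27; 27; 27; 27]; [:: 19; 26; 27; 26; 27; 27; 27; 27; 27]; [:: 18; 25; 27; 25; 27; 27; 27; 27; 27]; [:: 19; 26; 27; 26; 27; 27; 27; 27; 27]; [:: 19; 26; 27; 26; 27; 27; 27; 27; 27]; [:: 19; 26; 27; 26; 27; 27; 27; 27; 27]; [:: 19; 26; 27; 26; 27; 27; 27; 27; 27]; [:: 19; 26; 27; 26; 27;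 27; 27; 27; 27]]; [:: [:: 11; 18; 25; 18; 25; 27; 25; 27; 27]; [:: 18; 25; 27; 25; 27; 27; 27; 27; 27]; [:: 19; 26; 27; 26; 27; 27; 27; 27; 27]; [:: 18; 25; 27; 25; 27; 27; 27; 27; 27]; [:: 19; 26; 27; 26; 27; 27; 27; 27; 27]; [:: 19; 26; 27; 26; 27; 27; 27; 27; 27]; [:: 19; 26; 27; 26; 27; 27; 27; 27; 27]; [:: 19; 26; 27; 26; 27; 27; 27; 27; 27]; [:: 19; 26; 27; 26; 27; 27; 27; 27; 27]]; [:: [:: 11; 18; 25; 18; 25; 27; 25; 27; 27]; [:: 18; 25; 27; 25; 27; 27; 27; 27; 27]; [:: 19; 26; 27; 26; 27; 27; 27; 27; 27]; [:: 18; 25; 27; 25; 27; 27; 27; 27; 27]; [:: 19; 26; 27; 26; 27; 27; 27; 27; 27]; [:: 19; 26; 27; 26; 27; 27; 27; 27; 27]; [:: 19; 26; 27; 26; 27; 27; 27; 27; 27]; [:: 19; 26; 27; 26; 27; 27; 27; 27; 27]; [:: 19; 26; 27; 26; 27; 27; 27; 27; 27]]; [:: [:: 11; 18; 25; 18; 25; 27; 25; 27; 27]; [:: 18; 25; 27; 25; 27; 27; 27; 27; 27]; [:: 19; 26; 27; 26; 27; 27; 27; 27; 27]; [:: 18; 25; 27; 25; 27; 27; 27; 27; 27]; [:: 19; 26; 27; 26; 27; 27; 27; 27; 27]; [:: 19; 26; 27; 26; 27; 27; 27; 27; 27]; [:: 19; 26; 27; 26; 27; 27; 27; 27; 27]; [::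 19; 26; 27; 26; 27; 27; 27; 27; 27]; [:: 19; 26; 27; 26; 27; 27; 27; 27; 27]]; [:: [:: 11; 18; 25; 18; 25; 27; 25; 27; 27]; [:: 18; 25; 27; 25; 27; 27; 27; 27; 27]; [:: 19; 26; 27; 26; 27; 27; 27; 27; 27]; [:: 18; 25; 27; 25; 27; 27; 27; 27; 27]; [:: 19; 26; 27; 26; 27; 27; 27; 27; 27]; [:: 19; 26; 27; 26; 27; 27; 27; 27; 27]; [:: 19; 26; 27; 26; 27; 27; 27; 27; 27]; [:: 19; 26; 27; 26; 27; 27; 27; 27; 27]; [:: 19; 26; 27; 26; 27; 27; 27; 27; 27]]]; [:: [:: [:: 2; 9; 7; 9; 16; 14; 16; 23; 21]; [:: 9; 16; 14; 16; 23; 21; 23; 27; 27]; [:: 16; 23; 21; 23; 27; 27; 27; 27; 27]; [:: 9; 16; 14; 16; 23; 21; 23; 27; 27]; [:: 16; 23; 21; 23; 27; 27; 27; 27; 27]; [:: 19; 26; 27; 26; 27; 27; 27; 27; 27]; [:: 16; 23; 21; 23; 27; 27; 27; 27; 27]; [:: 19; 26; 27; 26; 27; 27; 27; 27; 27]; [:: 19; 26; 27; 26; 27; 27; 27; 27; 27]]; [:: [:: 0; 7; 14; 7; 14; 21; 14; 21; 27]; [:: 7; 14; 21; 14; 21; 27; 21; 27; 27]; [:: 14; 21; 27; 21; 27; 27; 27; 27; 27]; [:: 7; 14; 21; 14; 21; 27; 21; 27; 27]; [:: 14; 21; 27; 21; 27; 27; 27; 27; 27]; [:: 19; 26; 27;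 26; 27; 27; 27; 27; 27]; [:: 14; 21; 27; 21; 27; 27; 27; 27; 27]; [:: 19; 26; 27; 26; 27; 27; 27; 27; 27]; [:: 19; 26; 27; 26; 27; 27; 27; 27; 27]]; [:: [:: 4; 11; 18; 11; 18; 25; 18; 25; 27]; [:: 11; 18; 25; 18; 25; 27; 25; 27; 27]; [:: 18; 25; 27; 25; 27; 27; 27; 27; 27]; [:: 11; 18; 25; 18; 25; 27; 25; 27; 27]; [:: 18; 25; 27; 25; 27; 27; 27; 27; 27]; [:: 19; 26; 27; 26; 27; 27; 27; 27; 27]; [:: 18; 25; 27; 25; 27; 27; 27; 27; 27]; [:: 19; 26; 27; 26; 27; 27; 27; 27; 27]; [:: 19; 26; 27; 26; 27; 27; 27; 27; 27]]; [:: [:: 9; 16; 14; 16; 23; 21; 23; 27; 27]; [:: 16; 23; 21; 23; 27; 27; 27; 27; 27]; [:: 19; 26; 27; 26; 27; 27; 27; 27; 27]; [:: 16; 23; 21; 23; 27; 27; 27; 27; 27]; [:: 19; 26; 27; 26; 27; 27; 27; 27; 27]; [:: 19; 26; 27; 26; 27; 27; 27; 27; 27]; [:: 19; 26; 27; 26; 27; 27; 27; 27; 27]; [:: 19; 26; 27; 26; 27; 27; 27; 27; 27]; [:: 19; 26; 27; 26; 27; 27; 27; 27; 27]]; [:: [:: 7; 14; 21; 14; 21; 27; 21; 27; 27]; [:: 14; 21; 27; 21; 27; 27; 27; 27; 27]; [:: 19; 26; 27; 26; 27; 27; 27; 27; 27]; [:: 14; 21; 27; 21; 27; 27; 27; 27;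 27]; [:: 19; 26; 27; 26; 27; 27; 27; 27; 27]; [:: 19; 26; 27; 26; 27; 27; 27; 27; 27]; [:: 19; 26; 27; 26; 27; 27; 27; 27; 27]; [:: 19; 26; 27; 26; 27; 27; 27; 27; 27]; [:: 19; 26; 27; 26; 27; 27; 27; 27; 27]]; [:: [:: 11; 18; 25; 18; 25; 27; 25; 27; 27]; [:: 18; 25; 27; 25; 27; 27; 27; 27; 27]; [:: 19; 26; 27; 26; 27; 27; 27; 27; 27]; [:: 18; 25; 27; 25; 27; 27; 27; 27; 27]; [:: 19; 26; 27; 26; 27; 27; 27; 27; 27]; [:: 19; 26; 27; 26; 27; 27; 27; 27; 27]; [:: 19; 26; 27; 26; 27; 27; 27; 27; 27]; [:: 19; 26; 27; 26; 27; 27; 27; 27; 27]; [:: 19; 26; 27; 26; 27; 27; 27; 27; 27]]; [:: [:: 7; 14; 21; 14; 21; 27; 21; 27; 27]; [:: 14; 21; 27; 21; 27; 27; 27; 27; 27]; [:: 19; 26; 27; 26; 27; 27; 27; 27; 27]; [:: 14; 21; 27; 21; 27; 27; 27; 27; 27]; [:: 19; 26; 27; 26; 27; 27; 27; 27; 27]; [:: 19; 26; 27; 26; 27; 27; 27; 27; 27]; [:: 19; 26; 27; 26; 27; 27; 27; 27; 27]; [:: 19; 26; 27; 26; 27; 27; 27; 27; 27]; [:: 19; 26; 27; 26; 27; 27; 27; 27; 27]]; [:: [:: 11; 18; 25; 18; 25; 27; 25; 27; 27]; [:: 18; 25; 27; 25; 27; 27; 27; 27; 27]; [:: 19; 26;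 27; 26; 27; 27; 27; 27; 27]; [:: 18; 25; 27; 25; 27; 27; 27; 27; 27]; [:: 19; 26; 27; 26; 27; 27; 27; 27; 27]; [:: 19; 26; 27; 26; 27; 27; 27; 27; 27]; [:: 19; 26; 27; 26; 27; 27; 27; 27; 27]; [:: 19; 26; 27; 26; 27; 27; 27; 27; 27]; [:: 19; 26; 27; 26; 27; 27; 27; 27; 27]]; [:: [:: 11; 18; 25; 18; 25; 27; 25; 27; 27]; [:: 18; 25; 27; 25; 27; 27; 27; 27; 27]; [:: 19; 26; 27; 26; 27; 27; 27; 27; 27]; [:: 18; 25; 27; 25; 27; 27; 27; 27; 27]; [:: 19; 26; 27; 26; 27; 27; 27; 27; 27]; [:: 19; 26; 27; 26; 27; 27; 27; 27; 27]; [:: 19; 26; 27; 26; 27; 27; 27; 27; 27]; [:: 19; 26; 27; 26; 27; 27; 27; 27; 27]; [:: 19; 26; 27; 26; 27; 27; 27; 27; 27]]]; [:: [:: [:: 3; 10; 14; 10; 17; 21; 17; 24; 27]; [:: 10; 17; 21; 17; 24; 27; 24; 27; 27]; [:: 17; 24; 27; 24; 27; 27; 27; 27; 27]; [:: 10; 17; 21; 17; 24; 27; 24; 27; 27]; [:: 17; 24; 27; 24; 27; 27; 27; 27; 27]; [:: 19; 26; 27; 26; 27; 27; 27; 27; 27]; [:: 17; 24; 27; 24; 27; 27; 27; 27; 27]; [:: 19; 26; 27; 26; 27; 27; 27; 27; 27]; [:: 19; 26; 27; 26; 27; 27; 27; 27; 27]]; [:: [:: 7; 14; 21; 14; 21;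 27; 21; 27; 27]; [:: 14; 21; 27; 21; 27; 27; 27; 27; 27]; [:: 19; 26; 27; 26; 27; 27; 27; 27; 27]; [:: 14; 21; 27; 21; 27; 27; 27; 27; 27]; [:: 19; 26; 27; 26; 27; 27; 27; 27; 27]; [:: 19; 26; 27; 26; 27; 27; 27; 27; 27]; [:: 19; 26; 27; 26; 27; 27; 27; 27; 27]; [:: 19; 26; 27; 26; 27; 27; 27; 27; 27]; [:: 19; 26; 27; 26; 27; 27; 27; 27; 27]]; [:: [:: 11; 18; 25; 18; 25; 27; 25; 27; 27]; [:: 18; 25; 27; 25; 27; 27; 27; 27; 27]; [:: 19; 26; 27; 26; 27; 27; 27; 27; 27]; [:: 18; 25; 27; 25; 27; 27; 27; 27; 27]; [:: 19; 26; 27; 26; 27; 27; 27; 27; 27]; [:: 19; 26; 27; 26; 27; 27; 27; 27; 27]; [:: 19; 26; 27; 26; 27; 27; 27; 27; 27]; [:: 19; 26; 27; 26; 27; 27; 27; 27; 27]; [:: 19; 26; 27; 26; 27; 27; 27; 27; 27]]; [:: [:: 10; 17; 21; 17; 24; 27; 24; 27; 27]; [:: 17; 24; 27; 24; 27; 27; 27; 27; 27]; [:: 19; 26; 27; 26; 27; 27; 27; 27; 27]; [:: 17; 24; 27; 24; 27; 27; 27; 27; 27]; [:: 19; 26; 27; 26; 27; 27; 27; 27; 27]; [:: 19; 26; 27; 26; 27; 27; 27; 27; 27]; [:: 19; 26; 27; 26; 27; 27; 27; 27; 27]; [:: 19; 26; 27; 26; 27; 27; 27; 27; 27]; [:: 19;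 26; 27; 26; 27; 27; 27; 27; 27]]; [:: [:: 11; 18; 25; 18; 25; 27; 25; 27; 27]; [:: 18; 25; 27; 25; 27; 27; 27; 27; 27]; [:: 19; 26; 27; 26; 27; 27; 27; 27; 27]; [:: 18; 25; 27; 25; 27; 27; 27; 27; 27]; [:: 19; 26; 27; 26; 27; 27; 27; 27; 27]; [:: 19; 26; 27; 26; 27; 27; 27; 27; 27]; [:: 19; 26; 27; 26; 27; 27; 27; 27; 27]; [:: 19; 26; 27; 26; 27; 27; 27; 27; 27]; [:: 19; 26; 27; 26; 27; 27; 27; 27; 27]]; [:: [:: 11; 18; 25; 18; 25; 27; 25; 27; 27]; [:: 18; 25; 27; 25; 27; 27; 27; 27; 27]; [:: 19; 26; 27; 26; 27; 27; 27; 27; 27]; [:: 18; 25; 27; 25; 27; 27; 27; 27; 27]; [:: 19; 26; 27; 26; 27; 27; 27; 27; 27]; [:: 19; 26; 27; 26; 27; 27; 27; 27; 27]; [:: 19; 26; 27; 26; 27; 27; 27; 27; 27]; [:: 19; 26; 27; 26; 27; 27; 27; 27; 27]; [:: 19; 26; 27; 26; 27; 27; 27; 27; 27]]; [:: [:: 11; 18; 25; 18; 25; 27; 25; 27; 27]; [:: 18; 25; 27; 25; 27; 27; 27; 27; 27]; [:: 19; 26; 27; 26; 27; 27; 27; 27; 27]; [:: 18; 25; 27; 25; 27; 27; 27; 27; 27]; [:: 19; 26; 27; 26; 27; 27; 27; 27; 27]; [:: 19; 26; 27; 26; 27; 27; 27; 27; 27]; [:: 19; 26; 27; 26; 27; 27;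 27; 27; 27]; [:: 19; 26; 27; 26; 27; 27; 27; 27; 27]; [:: 19; 26; 27; 26; 27; 27; 27; 27; 27]]; [:: [:: 11; 18; 25; 18; 25; 27; 25; 27; 27]; [:: 18; 25; 27; 25; 27; 27; 27; 27; 27]; [:: 19; 26; 27; 26; 27; 27; 27; 27; 27]; [:: 18; 25; 27; 25; 27; 27; 27; 27; 27]; [:: 19; 26; 27; 26; 27; 27; 27; 27; 27]; [:: 19; 26; 27; 26; 27; 27; 27; 27; 27]; [:: 19; 26; 27; 26; 27; 27; 27; 27; 27]; [:: 19; 26; 27; 26; 27; 27; 27; 27; 27]; [:: 19; 26; 27; 26; 27; 27; 27; 27; 27]]; [:: [:: 11; 18; 25; 18; 25; 27; 25; 27; 27]; [:: 18; 25; 27; 25; 27; 27; 27; 27; 27]; [:: 19; 26; 27; 26; 27; 27; 27; 27; 27]; [:: 18; 25; 27; 25; 27; 27; 27; 27; 27]; [:: 19; 26; 27; 26; 27; 27; 27; 27; 27]; [:: 19; 26; 27; 26; 27; 27; 27; 27; 27]; [:: 19; 26; 27; 26; 27; 27; 27; 27; 27]; [:: 19; 26; 27; 26; 27; 27; 27; 27; 27]; [:: 19; 26; 27; 26; 27; 27; 27; 27; 27]]]; [:: [:: [:: 3; 10; 17; 10; 17; 24; 17; 24; 27]; [:: 10; 17; 24; 17; 24; 27; 24; 27; 27]; [:: 17; 24; 27; 24; 27; 27; 27; 27; 27]; [:: 10; 17; 24; 17; 24; 27; 24; 27; 27]; [:: 17; 24; 27; 24; 27; 27; 27; 27; 27];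 [:: 19; 26; 27; 26; 27; 27; 27; 27; 27]; [:: 17; 24; 27; 24; 27; 27; 27; 27; 27]; [:: 19; 26; 27; 26; 27; 27; 27; 27; 27]; [:: 19; 26; 27; 26; 27; 27; 27; 27; 27]]; [:: [:: 10; 17; 24; 17; 24; 27; 24; 27; 27]; [:: 17; 24; 27; 24; 27; 27; 27; 27; 27]; [:: 19; 26; 27; 26; 27; 27; 27; 27; 27]; [:: 17; 24; 27; 24; 27; 27; 27; 27; 27]; [:: 19; 26; 27; 26; 27; 27; 27; 27; 27]; [:: 19; 26; 27; 26; 27; 27; 27; 27; 27]; [:: 19; 26; 27; 26; 27; 27; 27; 27; 27]; [:: 19; 26; 27; 26; 27; 27; 27; 27; 27]; [:: 19; 26; 27; 26; 27; 27; 27; 27; 27]]; [:: [:: 11; 18; 25; 18; 25; 27; 25; 27; 27]; [:: 18; 25; 27; 25; 27; 27; 27; 27; 27]; [:: 19; 26; 27; 26; 27; 27; 27; 27; 27]; [:: 18; 25; 27; 25; 27; 27; 27; 27; 27]; [:: 19; 26; 27; 26; 27; 27; 27; 27; 27]; [:: 19; 26; 27; 26; 27; 27; 27; 27; 27]; [:: 19; 26; 27; 26; 27; 27; 27; 27; 27]; [:: 19; 26; 27; 26; 27; 27; 27; 27; 27]; [:: 19; 26; 27; 26; 27; 27; 27; 27; 27]]; [:: [:: 10; 17; 24; 17; 24; 27; 24; 27; 27]; [:: 17; 24; 27; 24; 27; 27; 27; 27; 27]; [:: 19; 26; 27; 26; 27; 27; 27; 27; 27]; [:: 17; 24; 27;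 24; 27; 27; 27; 27; 27]; [:: 19; 26; 27; 26; 27; 27; 27; 27; 27]; [:: 19; 26; 27; 26; 27; 27; 27; 27; 27]; [:: 19; 26; 27; 26; 27; 27; 27; 27; 27]; [:: 19; 26; 27; 26; 27; 27; 27; 27; 27]; [:: 19; 26; 27; 26; 27; 27; 27; 27; 27]]; [:: [:: 11; 18; 25; 18; 25; 27; 25; 27; 27]; [:: 18; 25; 27; 25; 27; 27; 27; 27; 27]; [:: 19; 26; 27; 26; 27; 27; 27; 27; 27]; [:: 18; 25; 27; 25; 27; 27; 27; 27; 27]; [:: 19; 26; 27; 26; 27; 27; 27; 27; 27]; [:: 19; 26; 27; 26; 27; 27; 27; 27; 27]; [:: 19; 26; 27; 26; 27; 27; 27; 27; 27]; [:: 19; 26; 27; 26; 27; 27; 27; 27; 27]; [:: 19; 26; 27; 26; 27; 27; 27; 27; 27]]; [:: [:: 11; 18; 25; 18; 25; 27; 25; 27; 27]; [:: 18; 25; 27; 25; 27; 27; 27; 27; 27]; [:: 19; 26; 27; 26; 27; 27; 27; 27; 27]; [:: 18; 25; 27; 25; 27; 27; 27; 27; 27]; [:: 19; 26; 27; 26; 27; 27; 27; 27; 27]; [:: 19; 26; 27; 26; 27; 27; 27; 27; 27]; [:: 19; 26; 27; 26; 27; 27; 27; 27; 27]; [:: 19; 26; 27; 26; 27; 27; 27; 27; 27]; [:: 19; 26; 27; 26; 27; 27; 27; 27; 27]]; [:: [:: 11; 18; 25; 18; 25; 27; 25; 27; 27]; [:: 18; 25; 27; 25; 27; 27; 27; 27;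 27]; [:: 19; 26; 27; 26; 27; 27; 27; 27; 27]; [:: 18; 25; 27; 25; 27; 27; 27; 27; 27]; [:: 19; 26; 27; 26; 27; 27; 27; 27; 27]; [:: 19; 26; 27; 26; 27; 27; 27; 27; 27]; [:: 19; 26; 27; 26; 27; 27; 27; 27; 27]; [:: 19; 26; 27; 26; 27; 27; 27; 27; 27]; [:: 19; 26; 27; 26; 27; 27; 27; 27; 27]]; [:: [:: 11; 18; 25; 18; 25; 27; 25; 27; 27]; [:: 18; 25; 27; 25; 27; 27; 27; 27; 27]; [:: 19; 26; 27; 26; 27; 27; 27; 27; 27]; [:: 18; 25; 27; 25; 27; 27; 27; 27; 27]; [:: 19; 26; 27; 26; 27; 27; 27; 27; 27]; [:: 19; 26; 27; 26; 27; 27; 27; 27; 27]; [:: 19; 26; 27; 26; 27; 27; 27; 27; 27]; [:: 19; 26; 27; 26; 27; 27; 27; 27; 27]; [:: 19; 26; 27; 26; 27; 27; 27; 27; 27]]; [:: [:: 11; 18; 25; 18; 25; 27; 25; 27; 27]; [:: 18; 25; 27; 25; 27; 27; 27; 27; 27]; [:: 19; 26; 27; 26; 27; 27; 27; 27; 27]; [:: 18; 25; 27; 25; 27; 27; 27; 27; 27]; [:: 19; 26; 27; 26; 27; 27; 27; 27; 27]; [:: 19; 26; 27; 26; 27; 27; 27; 27; 27]; [:: 19; 26; 27; 26; 27; 27; 27; 27; 27]; [:: 19; 26; 27; 26; 27; 27; 27; 27; 27]; [:: 19; 26; 27; 26; 27; 27; 27; 27; 27]]]].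
Definition cidx (c : col) := 3 * c.1 + c.2.
Definition phi (c0 c1 c2 c3 : col) : nat :=
  nth 0 (nth [::] (nth [::] (nth [::] phiT (cidx c0)) (cidx c1)) (cidx c2)) (cidx c3).
Definition cs : seq col := [seq (a, b) | a <- iota 0 3, b <- iota 0 3].
Definition wt (c : col) := c.1 + c.2.
Definition pot_check : bool :=
  all (fun c0 => all (fun c1 => all (fun c2 => all (fun c3 => all (fun c4 =>
    valid c0 c1 c2 c3 c4 ==> (8 + phi c1 c2 c3 c4 <= 7 * wt c4 + phi c0 c1 c2 c3))
    cs) cs) cs) cs) cs.
Lemma pot_check_ok : pot_check. Proof. vm_compute. reflexivity. Qed.

Lemma mem_cs (c : col) : c.1 < 3 -> c.2 < 3 -> c \in cs.
Proof. by case: c => [[|[|[|a]]] [|[|[|b]]]]. Qed.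

Lemma pot (c0 c1 c2 c3 c4 : col) :
  c0.1 < 3 -> c0.2 < 3 -> c1.1 < 3 -> c1.2 < 3 -> c2.1 < 3 -> c2.2 < 3 ->
  c3.1 < 3 -> c3.2 < 3 -> c4.1 < 3 -> c4.2 < 3 ->
  valid c0 c1 c2 c3 c4 -> 8 + phi c1 c2 c3 c4 <= 7 * wt c4 + phi c0 c1 c2 c3.
Proof.
move=> a0 b0 a1 b1 a2 b2 a3 b3 a4 b4 V.
have /allP H0 := pot_check_ok.
have /allP H1 := H0 c0 (mem_cs a0 b0).
have /allP H2 := H1 c1 (mem_cs a1 b1).
have /allP H3 := H2 c2 (mem_cs a2 b2).
have /allP H4 := H3 c3 (mem_cs a3 b3).
have H5 := H4 c4 (mem_cs a4 b4).
by move: H5; rewrite V.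
Qed.

Definition win (H : nat -> col) N j o := H ((j + (N - 2) + o) %% N).
Definition Wu H N j :=
  valid (win H N j 0) (win H N j 1) (win H N j 2) (win H N j 3) (win H N j 4).

Definition cf n (f : {ffun gp_vertex n.+1 -> 'I_3}) (k : nat) : col :=
  (val (f (false, inord (k %% n.+1))), val (f (true, inord (k %% n.+1)))).

Lemma inord_eq n (y : 'I_n.+1) k : val y = k %% n.+1 -> inord (k %% n.+1) = y.
Proof. by move=> H; apply: val_inj; rewrite /= inordK ?H // ltn_pmod. Qed.

Lemma addmod_inv N k x y : k <= N -> y < N -> (y + k) %% N = x -> y = (x + N - k) %% N.
Proof.
move=> kN yN <-; rewrite -addnBA // modnDml -addnA subnKC // modnDr modn_small //.
Qed.

Lemma cf_mod n f k : @cf n f (k %% n.+1) = cf f k.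
Proof. by rewrite /cf modn_mod. Qed.

Lemma rdf_Wu n (f : {ffun gp_vertex n.+1 -> 'I_3}) :
  4 <= n -> is_rdf (@gp_adj n.+1 2) f -> forall j, j < n.+1 -> Wu (cf f) n.+1 j.
Proof.
move=> n4 /forallP Hf j jN.
have e2 : (j + (n.+1 - 2) + 2) %% n.+1 = j.
  by rewrite -addnA subnK ?modnDr ?modn_small //; nlia.
have n1 : 1 <= n.+1 by [].
have n2 : 2 <= n.+1 by nlia.
pose x : 'I_n.+1 := inord j.
have xj : val x = j by rewrite /x /= inordK.
have Ex : inord (j %% n.+1) = x by apply: inord_eq => /=; rewrite modn_small.
rewrite /Wu /win !cf_mod /valid.
have -> : cf f (j + (n.+1-2) + 2) = cf f j by rewrite -cf_mod e2.
rewrite /cf /= !Ex.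
apply/andP; split.
- have := Hf (false, x); case: eqP => [H0|]; last by [].
  move=> /= /existsP [[[|] y]] /= /andP [Ha H2].
  + by move/eqP: Ha H2 => <- ->; rewrite ?orbT.
  + case/orP: Ha => /eqP Ha.
    * have -> : inord ((j + (n.+1 - 2) + 3) %% n.+1) = y.
        by apply: inord_eq => /=; rewrite -Ha xj (_ : j + (n.+1 - 2) + 3 = j + 1 + n.+1) ?modnDr //; nlia.
      by rewrite H2 ?orbT.
    * have -> : inord ((j + (n.+1 - 2) + 1) %% n.+1) = y.
        apply: inord_eq => /=; rewrite (addmod_inv n1 (ltn_ord y) Ha).
        by rewrite xj (_ : j + n.+1 - 1 = j + (n.+1 - 2) + 1) //; nlia.
      by rewrite H2 ?orbT.
- have := Hf (true, x); case: eqP => [H0|]; last by [].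
  move=> /= /existsP [[[|] y]] /= /andP [Ha H2].
  + case/orP: Ha => /eqP Ha.
    * have -> : inord ((j + (n.+1 - 2) + 4) %% n.+1) = y.
        by apply: inord_eq => /=; rewrite -Ha xj (_ : j + (n.+1 - 2) + 4 = j + 2 + n.+1) ?modnDr //; nlia.
      by rewrite H2 ?orbT.
    * have -> : inord ((j + (n.+1 - 2) + 0) %% n.+1) = y.
        apply: inord_eq => /=; rewrite (addmod_inv n2 (ltn_ord y) Ha).
        by rewrite xj (_ : j + n.+1 - 2 = j + (n.+1 - 2) + 0) //; nlia.
      by rewrite H2 ?orbT.
  + by move/eqP: Ha H2 => <- ->; rewrite ?orbT.
Qed.

Lemma weight_cf n (f : {ffun gp_vertex n.+1 -> 'I_3}) :
  rdf_weight f = \sum_(0 <= j < n.+1) wt (cf f j).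
Proof.
rewrite /rdf_weight (eq_bigr (fun u => val (f (u.1, u.2)))); last by case.
rewrite -(pair_bigA _ (fun b j => val (f (b, j)))) big_bool /= -big_split big_mkord.
apply: eq_bigr => j _.
have E : inord (j %% n.+1) = j by apply: inord_eq; rewrite modn_small.
by rewrite /cf /wt /= E addnC.
Qed.

Lemma sum_shift (F : nat -> nat) N : F N = F 0 ->
  \sum_(0 <= j < N) F j.+1 = \sum_(0 <= j < N) F j.
Proof.
move=> H.
have E1 : \sum_(0 <= i < N.+1) F i = F 0 + \sum_(0 <= i < N) F i.+1 by rewrite big_nat_recl.
have E2 : \sum_(0 <= i < N.+1) F i = \sum_(0 <= i < N) F i + F N by rewrite big_nat_recr.
by apply/eqP; rewrite -(eqn_add2l (F 0)) -E1 E2 H addnC.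
Qed.

Lemma cf_addN n f k : @cf n f (k + n.+1) = cf f k.
Proof. by rewrite -cf_mod modnDr cf_mod. Qed.

Lemma lower n (f : {ffun gp_vertex n.+1 -> 'I_3}) :
  4 <= n -> is_rdf (@gp_adj n.+1 2) f -> 8 * n.+1 <= 7 * rdf_weight f.
Proof.
move=> n4 Hf.
pose F j := phi (win (cf f) n.+1 j 0) (win (cf f) n.+1 j 1)
                (win (cf f) n.+1 j 2) (win (cf f) n.+1 j 3).
have winS j o : win (cf f) n.+1 j.+1 o = win (cf f) n.+1 j o.+1.
  by rewrite /win !addSn addnS.
have win4 j : win (cf f) n.+1 j 4 = cf f j.+2.
  rewrite /win cf_mod (_ : j + (n.+1 - 2) + 4 = j.+2 + n.+1) ?cf_addN //; nlia.
have bnd1 k : (cf f k).1 < 3 by apply: ltn_ord.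
have bnd2 k : (cf f k).2 < 3 by apply: ltn_ord.
have step j : j < n.+1 -> 8 + F j.+1 <= 7 * wt (cf f j.+2) + F j.
  move=> jN; rewrite /F !winS -win4.
  have V := rdf_Wu n4 Hf jN; rewrite /Wu in V.
  rewrite /win in V *.
  by apply: pot V; rewrite ?bnd1 ?bnd2.
have perw j o : win (cf f) n.+1 (j + n.+1) o = win (cf f) n.+1 j o.
  by rewrite /win (_ : j + n.+1 + (n.+1 - 2) + o = j + (n.+1 - 2) + o + n.+1) ?modnDr //; nlia.
have per j : F (j + n.+1) = F j by rewrite /F !perw.
have S1 : \sum_(0 <= j < n.+1) F j.+1 = \sum_(0 <= j < n.+1) F j.
  by apply: sum_shift; rewrite -(per 0) add0n.
have S2 : \sum_(0 <= j < n.+1) wt (cf f j.+2) = \sum_(0 <= j < n.+1) wt (cf f j).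
  rewrite (@sum_shift (fun j => wt (cf f j.+1))); last by rewrite -[in RHS](cf_addN f 1).
  by rewrite (@sum_shift (fun j => wt (cf f j))) // -[in RHS](cf_addN f 0) add0n.
have L : \sum_(0 <= j < n.+1) (8 + F j.+1) <= \sum_(0 <= j < n.+1) (7 * wt (cf f j.+2) + F j).
  rewrite big_nat_cond [X in _ <= X]big_nat_cond; apply: leq_sum => j; rewrite andbT => /andP [_ jN]; exact: step.
move: L; rewrite [X in X <= _]big_split [X in _ <= X]big_split -big_distrr /= S1 S2 sum_nat_const_nat subn0 leq_add2r weight_cf.
by rewrite mulnC.
Qed.

Lemma Wu_rdf n (f : {ffun gp_vertex n.+1 -> 'I_3}) :
  4 <= n -> (forall j, j < n.+1 -> Wu (cf f) n.+1 j) -> is_rdf (@gp_adj n.+1 2) f.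
Proof.
move=> n4 HW; apply/forallP => [[b x]]; apply/implyP => /= /eqP H0.
have V := HW x (ltn_ord x).
have n2 : 2 <= n.+1 by nlia.
have Ex : inord (x %% n.+1) = x by apply: inord_eq; rewrite modn_small.
have IK k : val (inord (k %% n.+1) : 'I_n.+1) = k %% n.+1 by rewrite /= inordK // ltn_pmod.
rewrite /Wu /win !cf_mod in V.
have E2 : cf f (x + (n.+1 - 2) + 2) = cf f x.
  by rewrite -cf_mod (_ : x + (n.+1 - 2) + 2 = x + n.+1) ?modnDr ?cf_mod //; nlia.
move: V; rewrite E2 /cf /= !Ex => /andP [V1 V2].
case: b H0 => H0.
- move: V2; rewrite H0 /= => /or3P [] H2.
  + apply/existsP; exists (true, inord ((x + (n.+1 - 2) + 0) %% n.+1)); rewrite /= H2 andbT.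
    rewrite IK; apply/orP; right; apply/eqP.
    by rewrite modnDml (_ : x + (n.+1 - 2) + 0 + 2 = x + n.+1) ?modnDr ?modn_small //; nlia.
  + apply/existsP; exists (true, inord ((x + (n.+1 - 2) + 4) %% n.+1)); rewrite /= H2 andbT.
    rewrite IK; apply/orP; left; apply/eqP.
    by rewrite (_ : x + (n.+1 - 2) + 4 = x + 2 + n.+1) ?modnDr //; nlia.
  + by apply/existsP; exists (false, x); rewrite /= H2 eqxx.
- move: V1; rewrite H0 /= => /or3P [] H2.
  + apply/existsP; exists (false, inord ((x + (n.+1 - 2) + 1) %% n.+1)); rewrite /= H2 andbT.
    rewrite IK; apply/orP; right; apply/eqP.
    by rewrite modnDml (_ : x + (n.+1 - 2) + 1 + 1 = x + n.+1) ?modnDr ?modn_small //; nlia.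
  + apply/existsP; exists (false, inord ((x + (n.+1 - 2) + 3) %% n.+1)); rewrite /= H2 andbT.
    rewrite IK; apply/orP; left; apply/eqP.
    by rewrite (_ : x + (n.+1 - 2) + 3 = x + 1 + n.+1) ?modnDr //; nlia.
  + by apply/existsP; exists (true, x); rewrite /= H2 eqxx.
Qed.

Definition fG n (G : nat -> col) : {ffun gp_vertex n.+1 -> 'I_3} :=
  [ffun u : gp_vertex n.+1 => inord (if u.1 then (G (val u.2)).2 else (G (val u.2)).1)].

Lemma cf_fG n (G : nat -> col) : (forall x, (G x).1 < 3) -> (forall x, (G x).2 < 3) ->
  forall k, cf (fG n G) k = G (k %% n.+1).
Proof.
move=> H1 H2 k; rewrite /cf /fG !ffunE /= !inordK ?ltn_pmod //.
by case: (G _).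
Qed.

Lemma construct n (G : nat -> col) : 4 <= n ->
  (forall x, (G x).1 < 3) -> (forall x, (G x).2 < 3) ->
  (forall j, j < n.+1 -> Wu G n.+1 j) ->
  exists f, is_rdf (@gp_adj n.+1 2) f /\ rdf_weight f = \sum_(0 <= j < n.+1) wt (G j).
Proof.
move=> n4 H1 H2 HW; exists (fG n G); split.
- apply: Wu_rdf => // j jN.
  by rewrite /Wu /win !(cf_fG _ H1 H2) !modn_mod; apply: HW.
- rewrite weight_cf; apply: eq_big_nat => j /andP [_ jN].
  by rewrite (cf_fG _ H1 H2) modn_small.
Qed.

Definition Gen (Pf Qf : nat -> col) a x := if x < a * 7 then Pf (x %% 7) else Qf (x - a * 7).

Lemma mod_eq z y N : y < N -> (z = y \/ z = y + N \/ z = y + N + N) -> z %% N = y.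
Proof.
move=> yN [->|[->|->]]; first by rewrite modn_small.
  by rewrite modnDr modn_small.
by rewrite !modnDr modn_small.
Qed.

Lemma claim (Pf Qf : nat -> col) a m N : N = a * 7 + m -> 14 <= m ->
  (forall s, s < 11 -> Qf s = Pf (s %% 7)) ->
  forall j, j < N -> exists t, t < m /\
    forall o, o < 5 -> win (Gen Pf Qf a) N j o = win Qf m t o.
Proof.
move=> EN m14 HP.
have G1 x : x < a * 7 + 11 -> Gen Pf Qf a x = Pf (x %% 7).
  rewrite /Gen; case: (ltnP x (a * 7)) => // H1 H2.
  have -> : x %% 7 = (x - a * 7) %% 7 by rewrite -{1}(subnK H1) addnC modnMDl.
  by apply: HP; nlia.
have G2 x : a * 7 <= x -> Gen Pf Qf a x = Qf (x - a * 7).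
  by rewrite /Gen; case: (ltnP x (a * 7)) => // H1 H2; nlia.
move=> j jN.
case: (ltnP j 2) => j2.
  exists j; split; first by nlia.
  move=> o o5; rewrite /win.
  case: (ltnP (j + o) 2) => jo.
    have -> : (j + (N - 2) + o) %% N = j + (N - 2) + o by apply: mod_eq; nlia.
    have -> : (j + (m - 2) + o) %% m = j + (m - 2) + o by apply: mod_eq; nlia.
    rewrite G2; last by nlia.
    by congr Qf; nlia.
  have -> : (j + (N - 2) + o) %% N = j + o - 2 by apply: mod_eq; nlia.
  have -> : (j + (m - 2) + o) %% m = j + o - 2 by apply: mod_eq; nlia.
  by rewrite G1 ?HP //; nlia.
case: (ltnP j (a * 7 + 2)) => jc.
  exists (2 + (j - 2) %% 7); split.
    have h := ltn_pmod (j - 2) (isT : 0 < 7); nlia.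
  move=> o o5; rewrite /win.
  have -> : (j + (N - 2) + o) %% N = j - 2 + o by apply: mod_eq; nlia.
  have h7 := ltn_pmod (j - 2) (isT : 0 < 7).
  have -> : (2 + (j - 2) %% 7 + (m - 2) + o) %% m = (j - 2) %% 7 + o by apply: mod_eq; nlia.
  by rewrite G1 ?HP ?modnDml //; nlia.
exists (j - a * 7); split; first by nlia.
move=> o o5; rewrite /win.
case: (ltnP (j - 2 + o) N) => jo.
  have -> : (j + (N - 2) + o) %% N = j - 2 + o by apply: mod_eq; nlia.
  have -> : (j - a * 7 + (m - 2) + o) %% m = j - 2 + o - a * 7 by apply: mod_eq; nlia.
  by rewrite G2 //; nlia.
have -> : (j + (N - 2) + o) %% N = j - 2 + o - N by apply: mod_eq; nlia.
have -> : (j - a * 7 + (m - 2) + o) %% m = j - 2 + o - N by apply: mod_eq; nlia.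
by rewrite G1 ?HP //; nlia.
Qed.

Definition bndc (c : col) := (c.1 < 3) && (c.2 < 3).

Lemma nth_bnd (L : seq col) : all bndc L -> forall x, bndc (nth (0, 0) L x).
Proof.
move=> /allP H x; case: (ltnP x (size L)) => hx; first by apply: H; rewrite mem_nth.
by rewrite nth_default.
Qed.

Lemma sumP (Pf : nat -> col) a :
  \sum_(0 <= j < a * 7) wt (Pf (j %% 7)) = a * \sum_(0 <= j < 7) wt (Pf j).
Proof.
elim: a => [|a IH]; first by rewrite mul0n big_geq.
rewrite mulSn (big_cat_nat _ (n := a * 7)) //=; last by rewrite leq_addl.
rewrite IH addnC; congr (_ + _).
rewrite -{1}(add0n (a * 7)) big_addn addnK.
apply: eq_big_nat => i /andP [_ hi].
by rewrite addnC modnMDl modn_small.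
Qed.

Lemma general (Pl Ql : seq col) a n : n.+1 = a * 7 + size Ql -> 14 <= size Ql ->
  all (fun s => nth (0, 0) Ql s == nth (0, 0) Pl (s %% 7)) (iota 0 11) ->
  all bndc Pl -> all bndc Ql ->
  all (fun t => Wu (fun k => nth (0, 0) Ql k) (size Ql) t) (iota 0 (size Ql)) ->
  exists f, is_rdf (@gp_adj n.+1 2) f /\
    rdf_weight f = a * (\sum_(0 <= j < 7) wt (nth (0, 0) Pl j))
                   + \sum_(0 <= j < size Ql) wt (nth (0, 0) Ql j).
Proof.
move=> EN m14 /allP HP bP bQ /allP HW.
set Pf := fun k => nth (0, 0) Pl k.
set Qf := fun k => nth (0, 0) Ql k.
set m := size Ql in EN m14 HW *.
have HP' s : s < 11 -> Qf s = Pf (s %% 7).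
  by move=> hs; apply/eqP; apply: HP; rewrite mem_iota.
have bG x : bndc (Gen Pf Qf a x) by rewrite /Gen; case: ifP => _; apply: nth_bnd.
have H4 : 4 <= n by nlia.
have B1 x : (Gen Pf Qf a x).1 < 3 by case/andP: (bG x).
have B2 x : (Gen Pf Qf a x).2 < 3 by case/andP: (bG x).
have HW' j : j < n.+1 -> Wu (Gen Pf Qf a) n.+1 j.
  move=> jN.
  have [t [tm Ht]] := claim EN m14 HP' jN.
  have := HW t; rewrite mem_iota add0n => /(_ tm).
  by rewrite /Wu !Ht.
have [f [Hf Hw]] := construct H4 B1 B2 HW'.
exists f; split => //; rewrite Hw EN.
rewrite (big_cat_nat _ (n := a * 7)) //=; last by rewrite leq_addr.
congr (_ + _).
  rewrite -sumP; apply: eq_big_nat => i /andP [_ hi].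
  by rewrite /Gen hi.
rewrite -{1}(add0n (a * 7)) big_addn addKn.
apply: eq_big_nat => i /andP [_ hi].
by rewrite /Gen ltnNge leq_addl /= addnK.
Qed.

Definition Pl : seq col := [:: (0, 0); (1, 0); (0, 2); (0, 2); (1, 0); (0, 0); (2, 0)].
Definition Q0 : seq col := [:: (0, 0); (1, 0); (0, 2); (0, 2); (1, 0); (0, 0); (2, 0); (0, 0); (1, 0); (0, 2); (0, 2); (1, 0); (0, 0); (2, 0)].
Definition Q1 : seq col := [:: (0, 0); (1, 0); (0, 2); (0, 2); (1, 0); (0, 0); (2, 0); (0, 0); (1, 0); (0, 2); (0, 2); (0, 0); (2, 0); (0, 1); (2, 0)].
Definition Q2 : seq col := [:: (0, 0); (1, 0); (0, 2); (0, 2); (1, 0); (0, 0); (2, 0); (0, 0); (1, 0); (0, 2); (0, 2); (0, 0); (2, 0); (0, 1); (0, 1); (2, 0)].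
Definition Q3 : seq col := [:: (0, 0); (1, 0); (0, 2); (0, 2); (1, 0); (0, 0); (2, 0); (0, 0); (1, 0); (0, 2); (0, 2); (1, 0); (0, 0); (2, 0); (0, 1); (0, 1); (2, 0)].
Definition Q4 : seq col := [:: (0, 0); (1, 0); (0, 2); (0, 2); (1, 0); (0, 0); (2, 0); (0, 0); (1, 0); (0, 2); (0, 2); (0, 0); (2, 0); (0, 0); (0, 2); (0, 2); (0, 0); (2, 0)].
Definition Q5 : seq col := [:: (0, 0); (1, 0); (0, 2); (0, 2); (1, 0); (0, 0); (2, 0); (0, 0); (1, 0); (0, 2); (0, 2); (0, 0); (2, 0); (0, 0); (0, 2); (0, 2); (1, 0); (0, 0); (2, 0)].
Definition Q6 : seq col := [:: (0, 0); (1, 0); (0, 2); (0, 2); (1, 0); (0, 0); (2, 0); (0, 0); (1, 0); (0, 2); (0, 2); (0, 0); (2, 0); (0, 0); (1, 0); (0, 2); (0, 2); (1, 0); (0, 0); (2, 0)].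
Definition S5 : seq col := [:: (0, 0); (0, 0); (2, 0); (0, 2); (2, 0)].
Definition S6 : seq col := [:: (0, 0); (0, 2); (0, 2); (1, 0); (0, 0); (2, 0)].
Definition S7 : seq col := [:: (0, 0); (1, 0); (0, 2); (0, 2); (1, 0); (0, 0); (2, 0)].
Definition S8 : seq col := [:: (0, 0); (0, 0); (2, 0); (0, 2); (0, 0); (2, 0); (0, 2); (2, 0)].
Definition S9 : seq col := [:: (0, 0); (0, 2); (0, 2); (1, 0); (0, 0); (2, 0); (0, 1); (0, 1); (2, 0)].
Definition S10 : seq col := [:: (0, 0); (0, 0); (2, 0); (0, 2); (2, 0); (0, 0); (0, 0); (2, 0); (0, 2); (2, 0)].
Definition S11 : seq col := [:: (0, 0); (0, 2); (0, 2); (0, 0); (2, 0); (0, 0); (0, 2); (0, 2); (1, 0); (0, 0); (2, 0)].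
Definition S12 : seq col := [:: (0, 0); (0, 2); (0, 2); (0, 0); (2, 0); (0, 0); (1, 0); (0, 2); (0, 2); (1, 0); (0, 0); (2, 0)].
Definition S13 : seq col := [:: (0, 0); (0, 2); (0, 2); (1, 0); (0, 0); (2, 0); (0, 0); (1, 0); (0, 2); (0, 2); (1, 0); (0, 0); (2, 0)].

Lemma sum_iota (F : nat -> nat) N :
  \sum_(0 <= j < N) F j = sumn [seq F j | j <- iota 0 N].
Proof. by rewrite sumnE big_map /index_iota subn0. Qed.

Lemma small_ok n (L : seq col) : 4 <= n -> all bndc L ->
  all (fun j => Wu (fun k => nth (0, 0) L k) n.+1 j) (iota 0 n.+1) ->
  sumn [seq wt (nth (0, 0) L j) | j <- iota 0 n.+1] = (8 * n.+1 + 6) %/ 7 ->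
  exists f, is_rdf (@gp_adj n.+1 2) f /\ rdf_weight f = (8 * n.+1 + 6) %/ 7.
Proof.
move=> n4 bL /allP HW Hs.
have B1 x : (nth (0, 0) L x).1 < 3 by case/andP: (nth_bnd bL x).
have B2 x : (nth (0, 0) L x).2 < 3 by case/andP: (nth_bnd bL x).
have HW' j : j < n.+1 -> Wu (fun k => nth (0, 0) L k) n.+1 j.
  by move=> jN; apply: HW; rewrite mem_iota.
have [f [Hf Hw]] := construct n4 B1 B2 HW'.
by exists f; rewrite Hw sum_iota Hs.
Qed.

Lemma gen_ok (Ql : seq col) a n : n.+1 = a * 7 + size Ql -> 14 <= size Ql ->
  all (fun s => nth (0, 0) Ql s == nth (0, 0) Pl (s %% 7)) (iota 0 11) ->
  all bndc Pl -> all bndc Ql ->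
  all (fun t => Wu (fun k => nth (0, 0) Ql k) (size Ql) t) (iota 0 (size Ql)) ->
  sumn [seq wt (nth (0, 0) Pl j) | j <- iota 0 7] = 8 ->
  sumn [seq wt (nth (0, 0) Ql j) | j <- iota 0 (size Ql)] = (8 * size Ql + 6) %/ 7 ->
  exists f, is_rdf (@gp_adj n.+1 2) f /\ rdf_weight f = (8 * n.+1 + 6) %/ 7.
Proof.
move=> EN m14 h1 h2 h3 h4 s1 s2.
have [f [Hf Hw]] := general EN m14 h1 h2 h3 h4.
exists f; split => //; rewrite Hw !sum_iota s1 s2 EN.
rewrite (_ : 8 * (a * 7 + size Ql) + 6 = (a * 8) * 7 + (8 * size Ql + 6)) ?divnMDl //.
nlia.
Qed.

Lemma upper n : 4 <= n ->
  exists f, is_rdf (@gp_adj n.+1 2) f /\ rdf_weight f = (8 * n.+1 + 6) %/ 7.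
Proof.
move=> n4.
case: (ltnP n 13) => hn.
  do 4 (case: n n4 hn => [|n] n4 hn; first by []).
  case: n n4 hn => [|n] n4 hn; first by apply: (small_ok (L := S5)); vm_compute.
  case: n n4 hn => [|n] n4 hn; first by apply: (small_ok (L := S6)); vm_compute.
  case: n n4 hn => [|n] n4 hn; first by apply: (small_ok (L := S7)); vm_compute.
  case: n n4 hn => [|n] n4 hn; first by apply: (small_ok (L := S8)); vm_compute.
  case: n n4 hn => [|n] n4 hn; first by apply: (small_ok (L := S9)); vm_compute.
  case: n n4 hn => [|n] n4 hn; first by apply: (small_ok (L := S10)); vm_compute.
  case: n n4 hn => [|n] n4 hn; first by apply: (small_ok (L := S11)); vm_compute.
  case: n n4 hn => [|n] n4 hn; first by apply: (small_ok (L := S12)); vm_compute.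
  case: n n4 hn => [|n] n4 hn; first by apply: (small_ok (L := S13)); vm_compute.
  by [].
have Hd := divn_eq n.+1 7.
have r7 := ltn_pmod n.+1 (isT : 0 < 7).
move: Hd r7; set q := n.+1 %/ 7; set r := n.+1 %% 7 => Hd r7.
have q2 : 2 <= q by nlia.
case: r Hd r7 => [|[|[|[|[|[|[|r]]]]]]] Hd r7.
- have E : n.+1 = (q - 2) * 7 + 14 by nlia.
  by apply: (@gen_ok Q0 (q - 2) n E); vm_compute.
- have E : n.+1 = (q - 2) * 7 + 15 by nlia.
  by apply: (@gen_ok Q1 (q - 2) n E); vm_compute.
- have E : n.+1 = (q - 2) * 7 + 16 by nlia.
  by apply: (@gen_ok Q2 (q - 2) n E); vm_compute.
- have E : n.+1 = (q - 2) * 7 + 17 by nlia.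
  by apply: (@gen_ok Q3 (q - 2) n E); vm_compute.
- have E : n.+1 = (q - 2) * 7 + 18 by nlia.
  by apply: (@gen_ok Q4 (q - 2) n E); vm_compute.
- have E : n.+1 = (q - 2) * 7 + 19 by nlia.
  by apply: (@gen_ok Q5 (q - 2) n E); vm_compute.
- have E : n.+1 = (q - 2) * 7 + 20 by nlia.
  by apply: (@gen_ok Q6 (q - 2) n E); vm_compute.
- by [].
Qed.

Lemma bigmin_le (T : finType) (P : pred T) (F : T -> nat) x i0 :
  P i0 -> \big[minn/x]_(i | P i) F i <= F i0.
Proof.
move=> Pi0; rewrite unlock.
have : i0 \in index_enum T by rewrite mem_index_enum.
elim: (index_enum T) => // a s IH; rewrite inE => /orP [/eqP <-|/IH H] /=.
  by rewrite Pi0 geq_minl.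
by case: (P a) => //; exact: leq_trans (geq_minr _ _) H.
Qed.

Theorem theorem2p12 (n : nat) (hn : 5 <= n) :
  gammaR_GP n 2 = (8 * n + 6) %/ 7.
Proof.
case: n hn => [|n] // hn.
have n4 : 4 <= n by [].
rewrite /gammaR_GP /roman_domination_number.
apply/eqP; rewrite eqn_leq; apply/andP; split.
  have [f [Hf Hw]] := upper n4.
  by rewrite -Hw; apply: bigmin_le.
apply: (big_ind (fun y => (8 * n.+1 + 6) %/ 7 <= y)).
- rewrite card_prod card_bool card_ord -ltnS ltn_divLR //; nlia.
- by move=> x y hx hy; rewrite leq_min hx hy.
- move=> f Hf; have := lower n4 Hf => H.
  rewrite -ltnS ltn_divLR //; nlia.
Qed.
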